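(* Let $X$ have a pdf $f$ satisfying Conditions (A) and (B) below, and fix the uniform quantizer $Q_{\mathrm{uni}}^\delta$. Then the zero-wait sampler is asymptotically optimal: $$\lim_{\delta\to0}\Big[\mathrm{AoI}(S_{\mathrm z},Q_{\mathrm{uni}}^\delta,F^* )-\inf_S\mathrm{AoI}(S,Q_{\mathrm{uni}}^\delta,F^* )\Big]=0,$$ where the infimum is over all stationary deterministic sampling policies $S$.
   Context: Let $X$ be a real random variable with pdf $f$. Condition (A): $f$ is continuous and differentiable, and its support is a bounded interval $I$. Let $M=\max f$. Condition (B): $\int_I f\log_2^2 f\,dx$ and $-\int_I f\log_2 f\,dx$ exist and are finite. Quantizer. The uniform quantizer $Q_{\mathrm{uni}}^\delta$ partitions $I$ into consecutive cells of length $\delta$, with midpoint representation points. Let $p_i$ be the probability that $X$ lies in cell $i$. Codes. A real-valued code assigns lengths $l_i\in\mathbb R^+$ to the cells, subject to $\sum_i2^{-l_i}\le1$. The random codeword length is $L=l_i$ when $X$ is in cell $i$. Sampling policies. A stationary deterministic sampling policy $S$ is a measurable function $z:[0,\infty)\to[0,W]$, for some fixed $W$, which determines the waiting time $Z=z(L)$. The zero-wait policy $S_{\mathrm z}$ has $z\equiv0$. Objective. The AoI is $\mathrm{AoI}(S,Q,l)=\frac{E[(L+Z)^2]}{2E[L+Z]}+E[L]$, and $\mathrm{AoI}(S,Q,F^* )=\inf_l\mathrm{AoI}(S,Q,l)$, the infimum over real-valued codes. *)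

(* Defs.v *)
From HB Require Import structures.
From mathcomp Require Import all_boot all_order all_algebra.
From mathcomp Require Import all_classical all_reals all_analysis.
Unset Printing Implicit Defensive.
Import Order.TTheory GRing.Theory Num.Theory.
Import numFieldNormedType.Exports.
Local Open Scope classical_set_scope.
Local Open Scope ring_scope.

Section AoI.
Context {R : realType}.

Definition log2 (x : R) : R := ln x / ln 2.

Definition condA (f : R -> R) (a b : R) : Prop :=
  [/\ (forall x, 0 <= f x),
      (\int[lebesgue_measure]_(x in [set: R]) (f x)%:E = 1)%E,
      closure [set x | f x != 0] = `[a, b]%classic,
      {within `[a, b], continuous f} &
      {in `]a, b[, forall x, derivable f x 1}].

Definition condB (f : R -> R) (a b : R) : Prop :=
  lebesgue_measure.-integrable `[a, b] (fun x => (f x * (log2 (f x)) ^+ 2)%:E) /\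
  lebesgue_measure.-integrable `[a, b] (fun x => (f x * log2 (f x))%:E).

(* Uniform quantizer of step delta on I = [a,b]: cells
   [a + k delta, a + (k+1) delta) intersected with I, k < ncells. *)
Definition ncells (a b delta : R) : nat := `|Num.ceil ((b - a) / delta)|%N.

Definition cell (a b delta : R) (k : nat) : set R :=
  [set x | a + k%:R * delta <= x < a + k.+1%:R * delta] `&` `[a, b]%classic.

Definition pcell (f : R -> R) (a b delta : R) (k : nat) : R :=
  Rintegral lebesgue_measure (cell a b delta k) f.

(* real-valued codes: positive lengths satisfying Kraft's inequality *)
Definition code (N : nat) (l : 'I_N -> R) : Prop :=
  (forall i, 0 < l i) /\ \sum_(i < N) 2 `^ (- l i) <= 1.

(* stationary deterministic sampling policies with waiting bound W *)
Definition policy (W : R) (z : R -> R) : Prop :=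
  measurable_fun [set x : R | 0 <= x] z /\
  (forall x, 0 <= x -> 0 <= z x <= W).

Definition AoI (f : R -> R) (a b delta : R) (z : R -> R)
    (l : 'I_(ncells a b delta) -> R) : R :=
  let p := pcell f a b delta in
  (\sum_(i < ncells a b delta) p i * (l i + z (l i)) ^+ 2)
    / (2 * \sum_(i < ncells a b delta) p i * (l i + z (l i)))
  + \sum_(i < ncells a b delta) p i * l i.

(* AoI(S, Q_uni^delta, F^* ) = inf over real-valued codes *)
Definition AoI_opt (f : R -> R) (a b delta : R) (z : R -> R) : R :=
  inf [set AoI f a b delta z l | l in code (ncells a b delta)].

Definition zero_wait : R -> R := fun _ => 0.

Definition AoI_gap (f : R -> R) (a b W delta : R) : R :=
  AoI_opt f a b delta zero_wait
  - inf [set AoI_opt f a b delta z | z in policy W].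

End AoI.

(* Main.v *)
Require Import Defs.
From HB Require Import structures.
From mathcomp Require Import all_boot all_order all_algebra.
From mathcomp Require Import all_classical all_reals all_analysis.
From mathcomp Require Import ring lra.
Import Defs.
Import Order.TTheory GRing.Theory Num.Theory.
Import numFieldNormedType.Exports.
Local Open Scope classical_set_scope.
Local Open Scope ring_scope.

Section Alg.
Context {R : realType}.

Lemma ln2_gt0 : 0 < ln (2:R).
Proof. by apply: ln_gt0; rewrite ltr1n. Qed.

Lemma pow2E (x : R) : 2 `^ x = expR (x * ln 2).
Proof. by rewrite /powR pnatr_eq0. Qed.

Lemma log2_pow2 (x : R) : log2 (2 `^ x) = x.
Proof. rewrite /log2 ln_powR mulfK //; exact: lt0r_neq0 ln2_gt0. Qed.

Lemma pow2_log2 (r : R) : 0 < r -> 2 `^ (log2 r) = r.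
Proof.
move=> r0; rewrite pow2E /log2 mulfVK ?lnK //; last exact: lt0r_neq0 ln2_gt0.
Qed.

Lemma gibbs_term (p l : R) : 0 <= p ->
  (p - 2 `^ (- l)) / ln 2 <= p * l + p * log2 p.
Proof.
move=> p0; have l2 := ln2_gt0; set q := 2 `^ (- l).
have q0 : 0 < q by apply: powR_gt0.
have lq : ln q = - l * ln 2 by rewrite /q ln_powR.
case: (eqVneq p 0) => [->|pn0].
  rewrite !mul0r addr0 sub0r mulNr oppr_le0; apply: divr_ge0 => //; exact: ltW.
have pp : 0 < p by rewrite lt0r pn0.
have H1 : ln (q / p) <= q / p - 1.
  have := @le_ln1Dx _ (q / p - 1); rewrite [1 + _]addrC subrK; apply.
  by rewrite ltrBrDl addrN divr_gt0.
rewrite ln_div ?posrE // in H1.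
have H2 : p * (ln q - ln p) <= q - p.
  have := ler_wpM2l (ltW pp) H1.
  have -> : p * (q / p - 1) = q - p by field; exact: lt0r_neq0.
  by [].
rewrite ler_pdivrMr // /log2.
have -> : (p * l + p * (ln p / ln 2)) * ln 2 = p * l * ln 2 + p * ln p.
  by field; exact: lt0r_neq0.
move: H2; rewrite lq; nra.
Qed.

Definition ent N (p : nat -> R) := \sum_(i < N) p i * - log2 (p i).
Definition ent2 N (p : nat -> R) := \sum_(i < N) p i * (- log2 (p i)) ^+ 2.

Lemma var_expand {N} (p y : 'I_N -> R) (c : R) :
  \sum_(i < N) p i * (y i - c) ^+ 2 =
  \sum_(i < N) p i * y i ^+ 2 - 2 * c * \sum_(i < N) p i * y i
  + c ^+ 2 * \sum_(i < N) p i.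
Proof.
rewrite !mulr_sumr -sumrB -big_split /=; apply: eq_bigr => i _; ring.
Qed.

Lemma gibbs {N} {p : nat -> R} {l : 'I_N -> R} :
  (forall i : 'I_N, 0 <= p i) -> \sum_(i < N) p i = 1 -> code N l ->
  ent N p <= \sum_(i < N) p i * l i.
Proof.
move=> p0 ps [l0 kr].
have H : \sum_(i < N) (p i - 2 `^ (- l i)) / ln 2 <=
         \sum_(i < N) (p i * l i + p i * log2 (p i)).
  by apply: ler_sum => i _; apply: gibbs_term.
rewrite -mulr_suml sumrB ps big_split /= in H.
have H2 : 0 <= (1 - \sum_(i < N) 2 `^ (- l i)) / ln 2.
  by apply: divr_ge0; [rewrite subr_ge0 | exact: ltW ln2_gt0].
have -> : ent N p = - \sum_(i < N) p i * log2 (p i).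
  by rewrite /ent -sumrN; apply: eq_bigr => i _; rewrite mulrN.
lra.
Qed.


Definition AoIg N (p : nat -> R) (z : R -> R) (l : 'I_N -> R) : R :=
  (\sum_(i < N) p i * (l i + z (l i)) ^+ 2)
    / (2 * \sum_(i < N) p i * (l i + z (l i)))
  + \sum_(i < N) p i * l i.

Definition AoI_optg N (p : nat -> R) (z : R -> R) : R :=
  inf [set AoIg N p z l | l in code N].

Lemma lower {N} {p : nat -> R} {z : R -> R} {l : 'I_N -> R} :
  (forall i : 'I_N, 0 <= p i) -> \sum_(i < N) p i = 1 -> 0 < ent N p ->
  code N l -> (forall x, 0 <= x -> 0 <= z x) ->
  3 / 2 * ent N p <= AoIg N p z l.
Proof.
move=> p0 ps H0 cl z0.
have G := gibbs p0 ps cl.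
set S1 := \sum_(i < N) p i * l i in G *.
set B := \sum_(i < N) p i * (l i + z (l i)).
set A := \sum_(i < N) p i * (l i + z (l i)) ^+ 2.
have BS : S1 <= B.
  apply: ler_sum => i _; apply: ler_wpM2l => //.
  by rewrite lerDl; apply: z0; apply: ltW; case: cl.
have B0 : 0 < B by lra.
have AB : B ^+ 2 <= A.
  have := var_expand (fun i : 'I_N => p i) (fun i => l i + z (l i)) B.
  rewrite -/A -/B ps mulr1.
  have : 0 <= \sum_(i < N) p i * (l i + z (l i) - B) ^+ 2.
    by apply: sumr_ge0 => i _; apply: mulr_ge0 => //; apply: sqr_ge0.
  move=> h1 h2; rewrite h2 in h1; nra.
rewrite /AoIg -/A -/B -/S1.
have : B / 2 <= A / (2 * B).
  rewrite ler_pdivlMr ?mulr_gt0 //; nra.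
lra.
Qed.


Lemma p_le1 {N} {p : nat -> R} :
  (forall i : 'I_N, 0 <= p i) -> \sum_(i < N) p i = 1 ->
  forall i : 'I_N, p i <= 1.
Proof.
move=> p0 ps i; rewrite -ps (bigD1 i) //= lerDl.
by apply: sumr_ge0 => j _.
Qed.

Lemma N_gt0 {N} {p : nat -> R} : \sum_(i < N) p i = 1 -> (0 < N)%N.
Proof.
case: (posnP N) => [N0|//] ps; move: ps; rewrite N0 big_ord0 => /esym/eqP.
by rewrite oner_eq0.
Qed.

Lemma ent2_ge0 {N} {p : nat -> R} : (forall i : 'I_N, 0 <= p i) -> 0 <= ent2 N p.
Proof.
by move=> p0; apply: sumr_ge0 => i _; apply: mulr_ge0 => //; apply: sqr_ge0.
Qed.

Lemma code_ex {N} {p : nat -> R} {eps : R} :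
  (forall i : 'I_N, 0 <= p i) -> \sum_(i < N) p i = 1 -> 0 < eps ->
  exists l : 'I_N -> R, code N l /\
    forall i : 'I_N, p i * l i = p i * (- log2 (p i) + eps).
Proof.
move=> p0 ps e0; have N0 := N_gt0 ps; have l2 := ln2_gt0.
have p1 := p_le1 p0 ps.
set c := 2 `^ (- eps).
have c0 : 0 < c by apply: powR_gt0.
have c1 : c < 1.
  rewrite /c pow2E expR_lt1 mulNr oppr_lt0; exact: mulr_gt0.
have Nr : 0 < N%:R :> R by rewrite ltr0n.
have Nr1 : 1 <= N%:R :> R by rewrite ler1n.
set r := (1 - c) / N%:R.
have r0 : 0 < r by apply: divr_gt0 => //; rewrite subr_gt0.
have r1 : r < 1.
  rewrite /r ltr_pdivrMr // mul1r; lra.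
set K := - log2 r.
have K0 : 0 < K.
  rewrite /K oppr_gt0 /log2 ltr_pdivrMr // mul0r; apply: ln_lt0; lra.
exists (fun i : 'I_N => if 0 < p i then - log2 (p i) + eps else K); split; last first.
  move=> i; case: ifP => // /negbT; rewrite -leNgt => pi.
  have -> : p i = 0 by apply: le_anti; rewrite pi p0.
  by rewrite !mul0r.
split.
  move=> i; case: ifP => // pi.
  have : ln (p i) <= 0 by apply: ln_le0.
  rewrite /log2 => h; have : ln (p i) / ln 2 <= 0.
    by rewrite ler_pdivrMr // mul0r.
  lra.
apply: (@le_trans _ _ (\sum_(i < N) (c * p i + r))).
  apply: ler_sum => i _; case: ifP => pi.
    have -> : 2 `^ (- (- log2 (p i) + eps)) = c * p i.
      rewrite /c !pow2E.
      have -> : - (- log2 (p i) + eps) * ln 2 = - eps * ln 2 + ln (p i).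
        by rewrite /log2; field; exact: lt0r_neq0.
      by rewrite expRD lnK.
    by rewrite lerDl ltW.
  rewrite /K opprK pow2_log2 // lerDr; apply: mulr_ge0 => //; exact: ltW.
rewrite big_split /= -mulr_sumr ps mulr1 sumr_const card_ord -mulr_natl /r.
have -> : N%:R * ((1 - c) / N%:R) = 1 - c :> R.
  by field; exact: lt0r_neq0.
lra.
Qed.

Lemma upper {N} {p : nat -> R} :
  (forall i : 'I_N, 0 <= p i) -> \sum_(i < N) p i = 1 -> 0 < ent N p ->
  AoI_optg N p zero_wait <= ent2 N p / (2 * ent N p) + ent N p.
Proof.
move=> p0 ps E0.
have hl : has_lbound [set AoIg N p zero_wait l | l in code N].
  exists (3 / 2 * ent N p) => _ [l cl <-]; apply: lower => //.
apply/ler_addgt0Pr => e e0.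
have e20 : 0 < e / 2 by apply: divr_gt0.
have [l [cl hl']] := code_ex p0 ps e20.
apply: le_trans (ge_inf hl _) _; first by exists l.
rewrite /AoIg /zero_wait.
under eq_bigr => i _ do rewrite addr0.
under [X in _ / (2 * X)]eq_bigr => i _ do rewrite addr0.
have e1 : \sum_(i < N) p i * l i = ent N p + e / 2.
  rewrite (eq_bigr _ (fun i _ => hl' i)).
  under eq_bigr => i _ do rewrite mulrDr.
  by rewrite big_split /= -mulr_suml ps mul1r.
have e2 : \sum_(i < N) p i * l i ^+ 2 = ent2 N p + e * ent N p + (e / 2) ^+ 2.
  have -> : \sum_(i < N) p i * l i ^+ 2 =
            \sum_(i < N) p i * (- log2 (p i) - (- (e / 2))) ^+ 2.
    apply: eq_bigr => i _.
    case: (eqVneq (p i) 0) => [->|pn]; first by rewrite !mul0r.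
    have -> : l i = - log2 (p i) + e / 2 by apply: (mulfI pn); rewrite hl'.
    by rewrite opprK.
  rewrite var_expand /= ps mulr1 /ent2 /ent.
  set A := \sum_(i < N) _ * _ ^+ 2; set B := \sum_(i < N) _ * - _.
  by field.
rewrite e1 e2.
set E := ent N p; set E2 := ent2 N p.
have E20 : 0 <= E2 by apply: ent2_ge0.
set t := E2 / (2 * E).
have E0' : 0 < E by [].
have t0 : 0 <= t by apply: divr_ge0 => //; lra.
have Et : E2 = t * (2 * E) by rewrite /t mulfVK //; apply: lt0r_neq0; lra.
suff : (E2 + e * E + (e / 2) ^+ 2) / (2 * (E + e / 2)) <= t + e / 2 by lra.
rewrite ler_pdivrMr; last lra.
rewrite Et; nra.
Qed.


Lemma tlog_bound (t M : R) : 0 < t -> t <= M -> 1 <= M ->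
  t * ln t ^+ 2 <= 4 + M ^+ 3.
Proof.
move=> t0 tM M1.
have M3 : 0 <= M ^+ 3 by apply: exprn_ge0; lra.
case: (leP 1 t) => t1.
  have l0 : 0 <= ln t by apply: ln_ge0.
  have lt : ln t < t by apply: ln_sublinear.
  have h1 : ln t ^+ 2 <= t ^+ 2 by rewrite !expr2; nra.
  have h2 : t * ln t ^+ 2 <= t ^+ 3.
    by rewrite (exprS t 2); apply: ler_wpM2l => //; lra.
  have h3 : t ^+ 3 <= M ^+ 3.
    by apply: lerXn2r => //; rewrite nnegrE; lra.
  lra.
set x := - ln t.
have x0 : 0 < x by rewrite /x oppr_gt0; apply: ln_lt0; lra.
have te : t = (expR x)^-1 by rewrite /x -expRN opprK lnK // posrE.
have hx := @expR_ge1Dxn R x 1 (ltW x0).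
rewrite /= in hx.
have ex0 := expR_gt0 x.
have lx : ln t ^+ 2 = x ^+ 2 by rewrite /x sqrrN.
rewrite lx {1}te.
have : (expR x)^-1 * x ^+ 2 <= 2.
  rewrite mulrC -/(x ^+ 2 / expR x) ler_pdivrMr //.
  move: hx; rewrite [2`!]/= (_ : (2%:R : R) = 2) //; lra.
lra.
Qed.

Lemma term_bound (p d M : R) : 0 < d -> 0 <= p -> p <= M * d -> 1 <= M ->
  p * (log2 p - log2 d) ^+ 2 <= d * ((4 + M ^+ 3) / ln 2 ^+ 2).
Proof.
move=> d0 p0 pM M1; have l2 := ln2_gt0.
have M3 : 0 <= M ^+ 3 by apply: exprn_ge0; lra.
have C0 : 0 <= (4 + M ^+ 3) / ln 2 ^+ 2.
  by apply: divr_ge0; [lra | apply: sqr_ge0].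
case: (eqVneq p 0) => [->|pn]; first by rewrite mul0r; apply: mulr_ge0 => //; lra.
have pp : 0 < p by rewrite lt0r pn.
have e : log2 p - log2 d = ln (p / d) / ln 2.
  by rewrite ln_div ?posrE // /log2; field; exact: lt0r_neq0.
rewrite e.
have -> : p * (ln (p / d) / ln 2) ^+ 2 =
          d * ((p / d) * ln (p / d) ^+ 2 / ln 2 ^+ 2).
  by field; apply/andP; split; exact: lt0r_neq0.
apply: ler_wpM2l; first lra.
rewrite ler_pM2r ?invr_gt0 ?exprn_gt0 //.
apply: tlog_bound => //; first exact: divr_gt0.
by rewrite ler_pdivrMr.
Qed.

Lemma zero_wait_policy (W : R) : 0 <= W -> policy W zero_wait.
Proof.
move=> W0; split; first exact: measurable_cst.
by move=> x _; rewrite /zero_wait lexx W0.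
Qed.

Lemma gap_bound N (p : nat -> R) (W d M : R) :
  0 <= W -> (forall i : 'I_N, 0 <= p i <= M * d) -> \sum_(i < N) p i = 1 ->
  0 < d -> 1 <= M -> M * d < 1 ->
  0 <= AoI_optg N p zero_wait - inf [set AoI_optg N p z | z in policy W] <=
  N%:R * d * ((4 + M ^+ 3) / ln 2 ^+ 2) / (2 * - log2 (M * d)).
Proof.
move=> W0 pb ps d0 M1 Md1; have l2 := ln2_gt0.
have p0 : forall i : 'I_N, 0 <= p i by move=> i; case/andP: (pb i).
set L := - log2 (M * d).
have Md0 : 0 < M * d by apply: mulr_gt0 => //; lra.
have L0 : 0 < L.
  rewrite /L oppr_gt0 /log2 ltr_pdivrMr // mul0r; apply: ln_lt0; lra.
have HL : L <= ent N p.
  have -> : L = \sum_(i < N) p i * L by rewrite -mulr_suml ps mul1r.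
  apply: ler_sum => i _.
  case: (eqVneq (p i) 0) => [->|pn]; first by rewrite !mul0r.
  apply: ler_wpM2l => //.
  have pp : 0 < p i by rewrite lt0r pn (p0 i).
  rewrite /L lerN2 /log2 ler_pM2r ?invr_gt0 // ler_ln ?posrE //.
  by case/andP: (pb i).
have E0 : 0 < ent N p by lra.
have U := upper p0 ps E0.
set T := [set AoI_optg N p z | z in policy W].
have lbT : lbound T (3 / 2 * ent N p).
  move=> _ [z pz <-]; apply: lb_le_inf.
    have [l [cl _]] := @code_ex N p 1 p0 ps ltr01.
    by exists (AoIg N p z l); exists l.
  move=> _ [l cl <-]; apply: lower => // x x0.
  by case: pz => _ /(_ x x0) /andP[].
have zT : T (AoI_optg N p zero_wait) by exists zero_wait => //; exact: zero_wait_policy.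
have i1 : 3 / 2 * ent N p <= inf T by apply: lb_le_inf => //; exists (AoI_optg N p zero_wait).
have i2 : inf T <= AoI_optg N p zero_wait.
  by apply: (ge_inf _ zT); exists (3 / 2 * ent N p).
set C := (4 + M ^+ 3) / ln 2 ^+ 2.
set m := - log2 d.
have V := var_expand (fun i : 'I_N => p i) (fun i : 'I_N => - log2 (p i)) m.
rewrite /= ps mulr1 -/(ent2 N p) -/(ent N p) in V.
have VB : \sum_(i < N) p i * (- log2 (p i) - m) ^+ 2 <= N%:R * d * C.
  have -> : N%:R * d * C = \sum_(i < N) d * C.
    by apply/esym; rewrite sumr_const card_ord -mulr_natl /C; field; apply: lt0r_neq0.
  apply: ler_sum => i _; rewrite /m -opprD sqrrN.
  case/andP: (pb i) => pi0 piM; exact: term_bound.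
set E := ent N p in V U i1 HL E0 *; set E2 := ent2 N p in V U *.
have E0' : 0 < E by [].
have HL' : L <= E by [].
have key : E2 - E ^+ 2 <= N%:R * d * C.
  apply: le_trans VB; rewrite V.
  have := sqr_ge0 (E - m); rewrite sqrrB; lra.
have NC0 : 0 <= N%:R * d * C.
  apply: mulr_ge0; [apply: mulr_ge0 => //; exact: ltW|].
  apply: divr_ge0; [|exact: sqr_ge0].
  have : 0 <= M ^+ 3 by apply: exprn_ge0; lra.
  lra.
apply/andP; split; first lra.
have g1 : AoI_optg N p zero_wait - inf T <= (E2 - E ^+ 2) / (2 * E).
  have -> : (E2 - E ^+ 2) / (2 * E) = E2 / (2 * E) + E - 3 / 2 * E.
    by field; exact: lt0r_neq0.
  lra.
apply: le_trans g1 _.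
apply: (@le_trans _ _ (N%:R * d * C / (2 * E))).
  by rewrite ler_pM2r // invr_gt0 mulr_gt0.
rewrite ler_wpM2l // lef_pV2 ?posrE ?mulr_gt0 //; lra.
Qed.

End Alg.

Section Ana.
Context {R : realType}.
Local Notation mu := (@lebesgue_measure R).

Lemma fz {f : R -> R} {a b : R} : condA f a b -> forall x, ~ `[a, b]%classic x -> f x = 0.
Proof.
case=> _ _ fs _ _ x nx; apply/eqP; apply: contra_notT nx => fx.
by rewrite -fs; apply: subset_closure.
Qed.

Lemma mf {f : R -> R} {a b : R} : condA f a b -> measurable_fun `[a, b]%classic f.
Proof.
case=> _ _ _ fc _; apply: measurable_realfun.subspace_continuous_measurable_fun => //.
Qed.

Lemma int1 {f : R -> R} {a b : R} : condA f a b ->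
  (\int[mu]_(x in `[a, b]%classic) (f x)%:E = 1)%E.
Proof.
move=> hA; have hA' := hA; case: hA' => _ fi _ _ _; rewrite -fi integral_mkcond.
congr integral; apply: funext => x; rewrite /patch; case: ifPn => // /negP xab.
by rewrite (fz hA) // => h; apply: xab; rewrite inE.
Qed.

Lemma ab_le {f : R -> R} {a b : R} : condA f a b -> a <= b.
Proof.
move=> hA; have := int1 hA; case: (leP a b) => // ba.
rewrite set_itv_ge ?integral_set0 //.
  by move/esym/eqP; rewrite onee_eq0.
by rewrite bnd_simp -ltNge.
Qed.

Lemma Mbound {f : R -> R} {a b : R} : condA f a b ->
  exists M, 1 <= M /\ forall x, `[a, b]%classic x -> f x <= M.
Proof.
move=> hA; have ab := ab_le hA; case: hA => _ _ _ fc _.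
have [c _ hc] := EVT_max ab fc.
exists (Num.max 1 (f c)); split; first by rewrite le_max lexx.
move=> x xab; apply: le_trans (hc x _) _; first by rewrite inE.
by rewrite le_max lexx orbT.
Qed.


Lemma cellE (a b d : R) k : cell a b d k =
  `[a + k%:R * d, a + k.+1%:R * d[%classic `&` `[a, b]%classic.
Proof.
rewrite /cell; congr (_ `&` _); apply/seteqP; split => x /=; by rewrite in_itv.
Qed.

Lemma cell_meas (a b d : R) k : measurable (cell a b d k).
Proof. by rewrite cellE; apply: measurableI; exact: measurable_itv. Qed.

Lemma cell_sub (a b d : R) k : cell a b d k `<=` `[a, b]%classic.
Proof. by move=> x []. Qed.

Lemma cell_mu (a b d : R) k : 0 < d -> (mu (cell a b d k) <= d%:E)%E.
Proof.
move=> d0; apply: (@le_trans _ _ (mu `[a + k%:R * d, a + k.+1%:R * d[%classic)).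
  apply: le_measure; rewrite ?inE; [exact: cell_meas|exact: measurable_itv|].
  by rewrite cellE; apply: subIsetl.
rewrite lebesgue_measure_itv /= lte_fin.
have -> : a + k.+1%:R * d = a + k%:R * d + d by rewrite -nat1r; ring.
rewrite ltrDl d0 -EFinB lee_fin; lra.
Qed.

Lemma cell_uniq {a b d : R} {k k' x} : 0 < d ->
  cell a b d k x -> cell a b d k' x -> k = k'.
Proof.
move=> d0 [/andP [h1 h2] _] [/andP [h3 h4] _].
have lt : forall i j : nat, a + i%:R * d <= x -> x < a + j.+1%:R * d -> (i <= j)%N.
  move=> i j hi hj; rewrite -ltnS -(ltr_nat R) -(ltr_pM2r d0); lra.
by apply/eqP; rewrite eqn_leq (lt _ _ h1 h4) (lt _ _ h3 h2).
Qed.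

Lemma pcell_bound {f : R -> R} {a b : R} (M d : R) k : condA f a b ->
  (forall x, `[a, b]%classic x -> f x <= M) -> 0 <= M -> 0 < d ->
  (\int[mu]_(x in cell a b d k) (f x)%:E = (pcell f a b d k)%:E)%E /\
  0 <= pcell f a b d k <= M * d.
Proof.
move=> hA fM M0 d0; have hA' := hA; case: hA' => f0 _ _ _ _.
have mc := cell_meas a b d k.
have mfc : measurable_fun (cell a b d k) f.
  exact: measurable_funS (measurable_itv _) (cell_sub _ _ _ _) (mf hA).
set I := (\int[mu]_(x in cell a b d k) (f x)%:E)%E.
have I0 : (0 <= I)%E by apply: integral_ge0 => x _; rewrite lee_fin.
have IM : (I <= (M * d)%:E)%E.
  apply: (@le_trans _ _ (\int[mu]_(x in cell a b d k) (cst M%:E) x)%E).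
    apply: ge0_le_integral => //.
    - by move=> x _; rewrite lee_fin.
    - exact/measurable_realfun.measurable_EFinP.
    - by move=> x cx; rewrite lee_fin; apply: fM; apply: cell_sub cx.
  rewrite integral_cst // EFinM; apply: lee_pmul => //.
  exact: cell_mu.
have If : I \is a fin_num.
  by rewrite ge0_fin_numE //; apply: le_lt_trans IM _; exact: ltry.
have IE : I = (pcell f a b d k)%:E by rewrite /pcell /Rintegral -/I fineK.
split => //; rewrite -lee_fin -IE I0 /= -lee_fin -IE; exact: IM.
Qed.


Lemma ncells_bound {a b d : R} : a <= b -> 0 < d ->
  (b - a) / d <= (ncells a b d)%:R /\ (ncells a b d)%:R * d <= b - a + d.
Proof.
move=> ab d0; set x := (b - a) / d.
have x0 : 0 <= x by apply: divr_ge0; lra.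
have -> : (ncells a b d)%:R = (Num.ceil x)%:~R :> R.
  rewrite /ncells natr_absz -/x ger0_norm // ceil_ge0; lra.
have := ceil_itv x; rewrite intrB /= => /andP [h1 h2]; split => //.
have h : (Num.ceil x)%:~R * d < (x + 1) * d by rewrite ltr_pM2r //; lra.
have e : (x + 1) * d = b - a + d by rewrite /x; field; exact: lt0r_neq0.
lra.
Qed.

Lemma sum1 {f : R -> R} {a b : R} (d : R) : condA f a b -> 0 < d ->
  \sum_(i < ncells a b d) pcell f a b d i = 1.
Proof.
move=> hA d0; have ab := ab_le hA; have [M [M1 fM]] := Mbound hA.
have hA' := hA; case: hA' => f0 _ _ _ _.
have mfab := mf hA.
set N := ncells a b d.
pose F := fun i : 'I_N => cell a b d i.
pose s := index_enum 'I_N.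
pose D := \big[setU/set0]_(i <- s) F i.
have mD : measurable D by apply: bigsetU_measurable => i _; exact: cell_meas.
have Dsub : D `<=` `[a, b]%classic.
  by rewrite /D -bigcup_seq => x [i _]; apply: cell_sub.
have supD : `[a, b[%classic `<=` D.
  move=> x; rewrite /= in_itv /= => /andP [xa xb].
  set y := (x - a) / d.
  have y0 : 0 <= y by apply: divr_ge0; lra.
  have [nb1 _] := ncells_bound ab d0.
  have yN : y < N%:R.
    apply: lt_le_trans nb1; rewrite /y ltr_pM2r ?invr_gt0 //; lra.
  have kN : (Num.trunc y < N)%N by rewrite truncn_lt_nat.
  rewrite /D -bigcup_seq; exists (Ordinal kN); first by rewrite /= mem_index_enum.
  have := truncn_itv y0; rewrite /y ler_pdivlMr // ltr_pdivrMr // => /andP [k1 k2].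
  split; last by rewrite /= in_itv /=; apply/andP; split; lra.
  by rewrite /=; apply/andP; split; lra.
have eq1 : (\int[mu]_(x in D) (f x)%:E = 1)%E.
  apply: le_anti; apply/andP; split.
    rewrite -(int1 hA); apply: (ge0_subset_integral mu mD (measurable_itv _)) => //.
    - exact/measurable_realfun.measurable_EFinP.
    - by move=> x _; rewrite lee_fin.
  rewrite -{1}(int1 hA) -integral_itv_bndo_bndc; last first.
    apply/measurable_realfun.measurable_EFinP.
    apply: measurable_funS mfab => //; exact: subset_itv_co_cc.
  apply: (ge0_subset_integral mu (measurable_itv _) mD) => //.
  - apply/measurable_realfun.measurable_EFinP; exact: measurable_funS mfab.
  - by move=> x _; rewrite lee_fin.
have eq2 := @ge0_integral_bigsetU _ _ _ mu _ F (fun x => (f x)%:E) s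
  (fun i => cell_meas a b d i) (index_enum_uniq _).
rewrite -/D in eq2; rewrite eq2 in eq1; last 3 first.
- move=> i j _ _ [x [hi hj]]; apply: val_inj; exact: (cell_uniq d0 hi hj).
- apply/measurable_realfun.measurable_EFinP; exact: measurable_funS mfab.
- by move=> x _; rewrite lee_fin.
have : ((\sum_(i < N) pcell f a b d i)%:E = 1)%E.
  rewrite -sumEFin -eq1; apply: eq_bigr => i _.
  by have [-> _] := pcell_bound M d i hA fM (ltW (lt_le_trans ltr01 M1)) d0.
by move=> [].
Qed.

End Ana.

Theorem theorem4 (R : realType) (f : R -> R) (a b W : R) :
  0 <= W -> condA f a b -> condB f a b ->
  AoI_gap f a b W delta @[delta --> 0^'+] --> 0.
Proof.
move=> W0 hA _.
have ab := ab_le hA; have [M [M1 fM]] := Mbound hA.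
have l2 := @ln2_gt0 R.
have M0 : 0 <= M by lra.
set C := (4 + M ^+ 3) / ln 2 ^+ 2.
have C0 : 0 <= C.
  apply: divr_ge0; last exact: sqr_ge0.
  have : 0 <= M ^+ 3 by apply: exprn_ge0.
  lra.
set K := (b - a + 1) * C.
have K0 : 0 <= K by apply: mulr_ge0 => //; lra.
apply/cvgr0Pnorm_lt => e e0.
set u := K / (2 * e).
have u0 : 0 <= u by apply: divr_ge0 => //; lra.
have Ku : K = u * (2 * e) by rewrite /u divfK //; apply: lt0r_neq0; lra.
set Q := (u + 1) * ln 2.
have Q0 : 0 < Q by apply: mulr_gt0 => //; lra.
set d1 := expR (- Q) / M.
have d10 : 0 < d1 by apply: divr_gt0; [exact: expR_gt0 | lra].
near=> d.
have d0 : 0 < d by near: d; exact: nbhs_right_gt.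
have dd1 : d < d1 by near: d; exact: nbhs_right_lt.
have dl1 : d < 1 by near: d; apply: nbhs_right_lt; exact: ltr01.
have Md : M * d < expR (- Q).
  by move: dd1; rewrite /d1 ltr_pdivlMr ?(mulrC d) //; lra.
have eQ : expR (- Q) < 1 by rewrite expR_lt1 oppr_lt0.
have Md1 : M * d < 1 by lra.
have Md0 : 0 < M * d by apply: mulr_gt0 => //; lra.
set N := ncells a b d.
set p := pcell f a b d.
have pb : forall i : 'I_N, 0 <= p i <= M * d.
  by move=> i; have [_ ->] := pcell_bound M d i hA fM M0 d0.
have ps : \sum_(i < N) p i = 1 := sum1 d hA d0.
have /andP [g0 g1] := @gap_bound R N p W d M W0 pb ps d0 M1 Md1.
have -> : AoI_gap f a b W d =
  AoI_optg N p zero_wait - inf [set AoI_optg N p z | z in policy W] by [].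
rewrite ger0_norm //; apply: le_lt_trans g1 _.
set L := - log2 (M * d).
have LQ : u + 1 < L.
  have : ln (M * d) < - Q.
    by rewrite -[X in _ < X]expRK ltr_ln ?posrE // expR_gt0.
  rewrite /L /log2 /Q => h.
  have : (u + 1) < - ln (M * d) / ln 2.
    by rewrite ltr_pdivlMr //; lra.
  lra.
have L0 : 0 < L by lra.
have [_ nb] := ncells_bound ab d0.
have NK : N%:R * d * C <= K.
  by rewrite /K; apply: ler_wpM2r => //; rewrite -/N in nb; lra.
rewrite ltr_pdivrMr; last lra.
have h : 0 < e * (L - (u + 1)) by apply: mulr_gt0 => //; rewrite subr_gt0.
rewrite Ku in NK.
have -> : e * (2 * L) = u * (2 * e) + 2 * (e * (L - (u + 1))) + 2 * e by ring.
rewrite -/C; lra.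
Unshelve. all: by end_near.
Qed.
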